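(* Fix $K \ge 2$. Let a strategy for stochastic $K$-armed bandits admit a scale-free distribution-free regret bound $\Phi_{\mathrm{free}} : \mathbb{N} \to [0,+\infty)$, i.e., for all real numbers $m < M$, without knowing $m$ or $M$, it ensures $R_T(\underline\nu) \le (M-m)\,\Phi_{\mathrm{free}}(T)$ for every bandit problem $\underline\nu$ in $\mathcal{D}_{m,M}$ and every $T \ge 1$. Assume moreover that $\Phi_{\mathrm{free}}(T) = o(T)$ as $T \to \infty$. Then for every bandit problem $\underline\nu = (\nu_a)_{a\in[K]}$ in $\mathcal{D}_{-,+}$, \[ \liminf_{T\to\infty} \frac{R_T(\underline\nu)}{T/\Phi_{\mathrm{free}}(T)} \ \ge\ \frac{1}{16}\sum_{a=1}^K \Delta_a . \]
   Context: Stochastic $K$-armed bandit: each arm $a \in [K]=\{1,\dots,K\}$ has a distribution $\nu_a$ on $\mathbb{R}$ with a first moment; $\mu_a$ is its mean, $\mu^\star = \max_a \mu_a$, and $\Delta_a = \mu^\star - \mu_a$. At round $t \ge 1$ the player picks $A_t \in [K]$ as a measurable function of $(U_0, Z_1, U_1, \dots, Z_{t-1}, U_{t-1})$, where $U_0, U_1, \dots$ are i.i.d. uniform on $[0,1]$ and independent of everything else, and receives and observes $Z_t$ drawn from $\nu_{A_t}$ independently given $A_t$. The (expected) regret is $R_T(\underline\nu) = T\mu^\star - \mathbb{E}[\sum_{t=1}^T Z_t] = \sum_a \Delta_a\,\mathbb{E}[N_a(T)]$, where $N_a(T)$ is the number of pulls of arm $a$ in rounds $1,\dots,T$. For real $m<M$,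 $\mathcal{D}_{m,M}$ is the set of probability distributions supported on $[m,M]$, and $\mathcal{D}_{-,+} = \bigcup_{m<M} \mathcal{D}_{m,M}$ (bounded distributions with unknown range). A bandit problem in a model $\mathcal{D}$ is a vector $(\nu_a)_{a\in[K]}$ with each $\nu_a\in\mathcal{D}$. *)

(* Defs.v *)
From HB Require Import structures.
From mathcomp Require Import all_boot all_order all_algebra.
From mathcomp Require Import all_classical all_reals all_analysis.
Set Implicit Arguments. Unset Strict Implicit. Unset Printing Implicit Defensive.
Import Order.TTheory GRing.Theory Num.Theory.
Local Open Scope classical_set_scope.
Local Open Scope ring_scope.

Definition dist (R : realType) := probability R R.

Definition supported_in (R : realType) (m M : R) (nu : dist R) : Prop :=
  nu `[m, M]%classic = 1%E.

Definition in_Dmm (R : realType) (K : nat) (m M : R) (nu : 'I_K -> dist R) :=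
  forall a, supported_in m M (nu a).
Definition in_Dbounded (R : realType) (K : nat) (nu : 'I_K -> dist R) :=
  exists m M : R, m < M /\ in_Dmm m M nu.

Definition mean (R : realType) (nu : dist R) : R :=
  fine (\int[nu]_x (x%:E))%E.
Definition mustar (R : realType) (K : nat) (nu : 'I_K -> dist R) : R :=
  fine (\big[Order.max/-oo%E]_(a < K) (mean (nu a))%:E).
Definition gap (R : realType) (K : nat) (nu : 'I_K -> dist R) (a : 'I_K) : R :=
  mustar nu - mean (nu a).

(** Histories are encoded as sequences h : nat -> R with
    h 0 = U_0, h (2s-1) = Z_s, h (2s) = U_s.
    A strategy gives, for each round t >= 1, the arm A_t as a function of
    the history; only rounds t >= 1 are used. *)
Definition strategy (R : realType) (K : nat) := nat -> (nat -> R) -> 'I_K.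

Definition coord_sets (R : realType) (n : nat) : set (set (nat -> R)) :=
  [set S | exists i B, (i < n)%N /\ measurable (B : set R) /\
                       S = (fun h : nat -> R => h i) @^-1` B].

(** A_t is a measurable function of (U_0, Z_1, U_1, ..., Z_{t-1}, U_{t-1}),
    i.e. of the first 2t-1 coordinates. *)
Definition measurable_strategy (R : realType) (K : nat) (A : strategy R K) :=
  forall t : nat, (1 <= t)%N -> forall a : 'I_K,
    <<s @coord_sets R (2 * t - 1)%N >> (A t @^-1` [set a]).

Definition ext (R : realType) (h : nat -> R) (i : nat) (v : R) : nat -> R :=
  fun j => if j == i then v else h j.

(** Expected number of pulls of arm a in rounds t, ..., t+n-1, given the
    history h (containing U_0, Z_1, ..., U_{t-1}); Z_t ~ nu_{A_t}
    and U_t ~ Unif[0,1] are drawn independently. *)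
Fixpoint exp_pulls_from (R : realType) (K : nat) (nu : 'I_K -> dist R)
    (A : strategy R K) (a : 'I_K) (n t : nat) (h : nat -> R) {struct n}
    : \bar R :=
  match n with
  | O => 0%E
  | n'.+1 =>
      ((A t h == a)%:R%:E +
       \int[nu (A t h)]_z
         \int[@lebesgue_measure R]_(u in `[0%R, 1%R]%classic)
           exp_pulls_from nu A a n' t.+1
             (ext (ext h (2 * t - 1)%N z) (2 * t)%N u))%E
  end.

Definition exp_pulls (R : realType) (K : nat) (nu : 'I_K -> dist R)
    (A : strategy R K) (a : 'I_K) (T : nat) : \bar R :=
  (\int[@lebesgue_measure R]_(u in `[0%R, 1%R]%classic)
     exp_pulls_from nu A a T 1 (ext (fun _ : nat => 0%R) 0 u))%E.

Definition regret (R : realType) (K : nat) (nu : 'I_K -> dist R)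
    (A : strategy R K) (T : nat) : \bar R :=
  (\sum_(a < K) (gap nu a)%:E * exp_pulls nu A a T)%E.

(* Main.v *)
Require Import Defs.
From HB Require Import structures.
From mathcomp Require Import all_boot all_order all_algebra.
From mathcomp Require Import all_classical all_reals all_analysis.
From mathcomp Require Import measurable_realfun.
From mathcomp Require Import ring lra.
Import Order.TTheory GRing.Theory Num.Theory.
Local Open Scope classical_set_scope.
Local Open Scope ring_scope.
Section PathSpace.
Variable R : realType.
Definition path := nat -> R.
HB.instance Definition _ := gen_eqMixin path.
HB.instance Definition _ := gen_choiceMixin path.
HB.instance Definition _ := isPointed.Build path (fun _ => 0).
Definition coords : set (set path) :=
  [set S | exists i (B : set R), measurable B /\ S = (fun h : path => h i) @^-1` B].
Definition Om : measurableType _ := g_sigma_algebraType coords.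

Lemma mcoord i : measurable_fun setT (fun h : Om => h i).
Proof.
move=> _ B mB; rewrite setTI; apply: sub_sigma_algebra; exists i, B; split => //.
Qed.

Lemma m_to_Om d (T : measurableType d) (f : T -> Om) :
  (forall j, measurable_fun setT (fun x => f x j)) -> measurable_fun setT f.
Proof.
move=> hf; apply: (@measurability _ _ T Om setT f coords) => //.
move=> _ [S [j [B [mB ->]]] <-].
have := hf j measurableT B mB.
by [].
Qed.

Lemma m_sub_coords n : <<s @coord_sets R n >> `<=` (@measurable _ Om).
Proof.
apply: smallest_sub; first exact: sigma_algebra_measurable.
move=> _ [i [B [_ [mB ->]]]]; apply: sub_sigma_algebra; exists i, B; split => //.
Qed.

End PathSpace.
Section Ext.
Variable R : realType.
Local Notation Om := (Om R).
Local Notation LR := (measurableTypeR R).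

Lemma m_snd_LR d (T : measurableType d) : measurable_fun setT (fun q : T * LR => (q.2 : R)).
Proof. move=> _ B mB; exact: (@measurable_snd _ _ T LR _ B mB). Qed.

Lemma m_ext2 i j : measurable_fun setT
  (fun q : (Om * R) * LR => (ext (ext q.1.1 i q.1.2) j q.2 : Om)).
Proof.
apply: m_to_Om => k; rewrite /ext.
case: eqP => _; first exact: m_snd_LR.
case: eqP => _.
  exact: (measurableT_comp measurable_snd measurable_fst).
exact: (measurableT_comp (@mcoord R k) (measurableT_comp measurable_fst measurable_fst)).
Qed.

Lemma m_ext0 : measurable_fun setT (fun u : LR => (ext (fun _ => 0) 0 u : Om)).
Proof.
apply: m_to_Om => k; rewrite /ext.
case: eqP => _; first by move=> _ B mB; rewrite setTI.
exact: measurable_cst.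
Qed.

Lemma m_fibers K d (T : measurableType d) (g : T -> 'I_K) (f : 'I_K -> T -> \bar R) :
  (forall b, measurable (g @^-1` [set b])) -> (forall b, measurable_fun setT (f b)) ->
  measurable_fun setT (fun x => f (g x) x).
Proof.
move=> hg hf _ Y mY; rewrite setTI.
have -> : (fun x => f (g x) x) @^-1` Y =
   \big[setU/set0]_(b < K) (g @^-1` [set b] `&` (setT `&` f b @^-1` Y)).
  apply/seteqP; split => x /=.
    move=> hx; rewrite -bigcup_seq /=; exists (g x); first by rewrite /= mem_index_enum.
    by split => //.
  rewrite -bigcup_seq => -[b _ [/= <- [_ ?]]] //.
by apply: bigsetU_measurable => b _; apply: measurableI => //; exact: hf.
Qed.
End Ext.
Section Meas.
Variable R : realType.
Variable K : nat.
Variable A : strategy R K.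
Hypothesis hA : measurable_strategy A.
Variable nu : 'I_K -> dist R.
Variable a : 'I_K.
Local Notation LR := (measurableTypeR R).
Local Notation leb := (@lebesgue_measure R).

Lemma F_ge0 n t h : (0 <= exp_pulls_from nu A a n t h)%E.
Proof.
elim: n t h => [|n IH] t h /=; first by [].
apply: adde_ge0; first by rewrite lee_fin.
apply: integral_ge0 => z _; apply: integral_ge0 => u _; exact: IH.
Qed.

Lemma mA t b : (1 <= t)%N -> measurable (A t @^-1` [set b] : set (Om R)).
Proof. move=> t1; exact: (@m_sub_coords R _ _ (hA t t1 b)). Qed.

Definition Gfun n t (p : Om R * R) : \bar R :=
  (\int[leb]_(u in `[0%R, 1%R]%classic)
     exp_pulls_from nu A a n t.+1 (ext (ext p.1 (2 * t - 1)%N p.2) (2 * t)%N u))%E.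

Lemma Gfun_ge0 n t p : (0 <= Gfun n t p)%E.
Proof. apply: integral_ge0 => u _; exact: F_ge0. Qed.

Lemma mF n t : (1 <= t)%N ->
  measurable_fun setT (fun h : Om R => exp_pulls_from nu A a n t h).
Proof.
elim: n t => [|n IH] t t1 /=; first exact: measurable_cst.
have mG : measurable_fun setT (Gfun n t).
  pose f := (fun q : (Om R * R) * LR =>
      exp_pulls_from nu A a n t.+1 (ext (ext q.1.1 (2 * t - 1)%N q.1.2) (2 * t)%N q.2)).
  have -> : Gfun n t = fubini_F leb (f \_ (setT `*` `[0%R, 1%R]%classic)).
    apply/funext => p; rewrite /Gfun /fubini_F [LHS]integral_mkcond.
    idtac.
    apply: eq_integral => u _; rewrite /patch.
    case: ifPn => [/set_mem hu|hu]; case: ifPn => [/set_mem [_ hu']|hu'] //.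
      by exfalso; move/negP: hu'; apply; apply/mem_set; split.
    by exfalso; move/negP: hu; apply; apply/mem_set.
  apply: measurable_fun_fubini_tonelli_F.
    apply/(measurable_restrictT _ _).1.
      by apply: measurableX => //; exact: measurable_itv.
    apply: measurable_funTS.
    exact: (measurableT_comp (IH t.+1 isT) (@m_ext2 R _ _)).
  move=> q; rewrite /patch; case: ifPn => // _; exact: F_ge0.
have mH b : measurable_fun setT (fun h : Om R => \int[nu b]_z Gfun n t (h, z))%E.
  exact: (measurable_fun_fubini_tonelli_F (m2 := nu b) (Gfun n t) mG (@Gfun_ge0 n t)).
refine (@m_fibers R K _ (Om R) (A t : Om R -> _)
   (fun b h => ((b == a)%:R%:E + \int[nu b]_z Gfun n t (h, z))%E) _ _).
  by move=> b; exact: mA.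
move=> b; apply: emeasurable_funD => //; exact: measurable_cst.
Qed.
End Meas.
Section Mix.
Variable R : realType.
Variables (nu0 : dist R) (x e : R).
Hypothesis e0 : 0 <= e.
Hypothesis e1 : e <= 1.
Let e0' : 0 <= 1 - e. Proof. by rewrite subr_ge0. Qed.

Definition mixm := measure_add (mscale (NngNum e0') nu0) (mscale (NngNum e0) (@dirac _ R x R)).
HB.instance Definition _ := Measure.on mixm.

Lemma mixmE S : mixm S = ((1 - e)%:E * nu0 S + e%:E * \d_x S)%E.
Proof. by rewrite /mixm measure_addE. Qed.

Lemma mixm_setT : mixm setT = 1%E.
Proof.
by rewrite mixmE probability_setT diracT !mule1 -EFinD subrK.
Qed.

HB.instance Definition _ := Measure_isProbability.Build _ _ _ mixm mixm_setT.

Definition mixd : dist R := mixm.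

Lemma int_mix (f : R -> \bar R) : measurable_fun setT f -> (forall z, 0 <= f z)%E ->
  (\int[mixd]_z f z = (1 - e)%:E * \int[nu0]_z f z + e%:E * f x)%E.
Proof.
move=> mf f0.
rewrite /mixd /= /mixm ge0_integral_measure_add //.
rewrite !ge0_integral_mscale // integral_dirac // diracT mul1e //.
Qed.
End Mix.
Section Bounds.
Variable R : realType.
Variable K : nat.
Variable A : strategy R K.
Hypothesis hA : measurable_strategy A.
Local Notation LR := (measurableTypeR R).
Local Notation leb := (@lebesgue_measure R).

Lemma leb01 : leb `[0%R, 1%R]%classic = 1%E.
Proof. by rewrite lebesgue_measure_itv /= lte_fin ltr01 sube0. Qed.

Lemma m_u (nu : 'I_K -> dist R) b n t h z : measurable_fun setT
  (fun u : LR => exp_pulls_from nu A b n t.+1 (ext (ext h (2 * t - 1)%N z) (2 * t)%N u)).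
Proof.
apply: (measurableT_comp (@mF R K A hA nu b n t.+1 isT)).
exact: (measurable_fun_pair2 ((h, z) : Om R * R) (@m_ext2 R (2 * t - 1)%N (2 * t)%N)).
Qed.

Lemma mGfun (nu : 'I_K -> dist R) b n t : measurable_fun setT (Gfun R K A nu b n t).
Proof.
pose f := (fun q : (Om R * R) * LR =>
    exp_pulls_from nu A b n t.+1 (ext (ext q.1.1 (2 * t - 1)%N q.1.2) (2 * t)%N q.2)).
have -> : Gfun R K A nu b n t = fubini_F leb (f \_ (setT `*` `[0%R, 1%R]%classic)).
  apply/funext => p; rewrite /Gfun /fubini_F [LHS]integral_mkcond.
  apply: eq_integral => u _; rewrite /patch.
  case: ifPn => [/set_mem hu|hu]; case: ifPn => [/set_mem [_ hu']|hu'] //.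
    by exfalso; move/negP: hu'; apply; apply/mem_set; split.
  by exfalso; move/negP: hu; apply; apply/mem_set.
apply: measurable_fun_fubini_tonelli_F.
  apply/(measurable_restrictT _ _).1.
    by apply: measurableX => //; exact: measurable_itv.
  apply: measurable_funTS.
  exact: (measurableT_comp (@mF R K A hA nu b n t.+1 isT) (@m_ext2 R (2 * t - 1)%N (2 * t)%N)).
move=> q; rewrite /patch; case: ifPn => // _; exact: (@F_ge0 R K A).
Qed.

Lemma m_z (nu : 'I_K -> dist R) b n t h :
  measurable_fun setT (fun z : R => Gfun R K A nu b n t (h, z)).
Proof. exact: (measurable_fun_pair2 (h : Om R) (mGfun nu b n t)). Qed.

Lemma F_le (nu : 'I_K -> dist R) b n t h :
  (exp_pulls_from nu A b n t h <= n%:R%:E)%E.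
Proof.
elim: n t h => [|n IH] t h /=; first by [].
have hG z : (Gfun R K A nu b n t (h, z) <= n%:R%:E)%E.
  rewrite /Gfun; apply: (@le_trans _ _ (\int[leb]_(u in `[0%R, 1%R]%classic) (cst n%:R%:E) u)%E).
    apply: ge0_le_integral.
    - exact: measurable_itv.
    - by move=> u _; exact: (@F_ge0 R K A).
    - exact: measurable_funTS (m_u nu b n t h z).
    - exact: measurable_cst.
    - by move=> u _; exact: IH.
  rewrite (@integral_cst _ _ _ leb _ (measurable_itv `[0%R, 1%R])).
  set L := (X in (_ * X <= _)%E); have -> : L = 1%E by exact: leb01.
  by rewrite mule1.
have hI : (\int[nu (A t h)]_z Gfun R K A nu b n t (h, z) <= n%:R%:E)%E.
  apply: (@le_trans _ _ (\int[nu (A t h)]_z (cst n%:R%:E) z)%E).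
    apply: ge0_le_integral.
    - exact: measurableT.
    - by move=> z _; exact: (@Gfun_ge0 R K A).
    - exact: m_z.
    - exact: measurable_cst.
    - by move=> z _; exact: hG.
  rewrite (@integral_cst _ _ _ (nu (A t h)) _ measurableT).
  set L := (X in (_ * X <= _)%E); have -> : L = 1%E by exact: probability_setT.
  by rewrite mule1.
rewrite -[n.+1]addn1 natrD EFinD addeC.
apply: leeD => //.
by rewrite lee_fin; case: (_ == _).
Qed.
End Bounds.
Section Sums.
Variable R : realType.
Variable K : nat.
Variable A : strategy R K.
Hypothesis hA : measurable_strategy A.
Local Notation LR := (measurableTypeR R).
Local Notation leb := (@lebesgue_measure R).

Lemma int01_cst (r : \bar R) : (\int[leb]_(u in `[0%R, 1%R]%classic) (cst r) u = r)%E.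
Proof.
rewrite (@integral_cst _ _ _ leb _ (measurable_itv `[0%R, 1%R])).
set L := (X in (_ * X)%E); have -> : L = 1%E by exact: leb01.
by rewrite mule1.
Qed.

Lemma intP_cst (P : dist R) (r : \bar R) : (\int[P]_z (cst r) z = r)%E.
Proof.
rewrite (@integral_cst _ _ _ P _ measurableT).
set L := (X in (_ * X)%E); have -> : L = 1%E by exact: probability_setT.
by rewrite mule1.
Qed.

Lemma F_sum (nu : 'I_K -> dist R) n t h :
  (\sum_(b < K) exp_pulls_from nu A b n t h = n%:R%:E)%E.
Proof.
elim: n t h => [|n IH] t h /=; first by rewrite big1.
rewrite big_split /=.
have -> : (\sum_(b < K) ((A t h == b)%:R : R)%:E = 1)%E.
  rewrite (bigD1 (A t h)) //= eqxx big1 ?adde0 // => b /negPf.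
  by rewrite eq_sym => ->.
have hG z : (\sum_(b < K) Gfun R K A nu b n t (h, z) = n%:R%:E)%E.
  rewrite /Gfun -ge0_integral_sum.
  - under eq_integral => u _ do rewrite IH.
    exact: int01_cst.
  - exact: measurable_itv.
  - move=> b; apply: measurable_funTS; exact: (@m_u R K A hA nu b n t h z).
  - by move=> b u _; exact: (@F_ge0 R K A).
rewrite -ge0_integral_sum.
- under eq_integral => z _ do rewrite hG.
  by rewrite intP_cst -[n.+1]addn1 natrD EFinD addeC.
- exact: measurableT.
- move=> b; exact: (@m_z R K A hA nu b n t h).
- move=> b z _; apply: integral_ge0 => u _; exact: (@F_ge0 R K A).
Qed.
End Sums.
Section Upper.
Variable R : realType.
Variable K : nat.
Variable A : strategy R K.
Hypothesis hA : measurable_strategy A.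
Local Notation LR := (measurableTypeR R).
Local Notation leb := (@lebesgue_measure R).

Lemma Gfun_le (nu : 'I_K -> dist R) b n t p : (Gfun R K A nu b n t p <= n%:R%:E)%E.
Proof.
rewrite /Gfun; apply: (@le_trans _ _ (\int[leb]_(u in `[0%R, 1%R]%classic) (cst n%:R%:E) u)%E).
  apply: ge0_le_integral.
  - exact: measurable_itv.
  - by move=> u _; exact: (@F_ge0 R K A).
  - exact: measurable_funTS (@m_u R K A hA nu b n t p.1 p.2).
  - exact: measurable_cst.
  - by move=> u _; exact: (@F_le R K A hA).
by rewrite int01_cst.
Qed.

Definition nup (nu : 'I_K -> dist R) (a : 'I_K) (x e : R) (e0 : 0 <= e) (e1 : e <= 1) :
  'I_K -> dist R := fun b => if b == a then @mixd R (nu a) x e e0 e1 else nu b.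

Lemma ebound (e n : R) (I J G : \bar R) : 0 <= e -> e <= 1 -> 0 <= n ->
  (0 <= I)%E -> I \is a fin_num -> (0 <= J)%E -> (J <= (1 + e * n)%:E * I)%E ->
  (0 <= G)%E -> (G <= n%:E)%E ->
  (1 + ((1 - e)%:E * J + e%:E * G) <= (1 + e * (n + 1))%:E * (1 + I))%E.
Proof.
move=> e0 e1 n0 I0 Ifin J0 JI G0 Gn.
have Jfin : J \is a fin_num.
  rewrite ge0_fin_numE //; apply: (le_lt_trans JI).
  by rewrite -(fineK Ifin) -EFinM ltry.
have Gfin : G \is a fin_num.
  by rewrite ge0_fin_numE //; apply: (le_lt_trans Gn); rewrite ltry.
rewrite -(fineK Ifin) -(fineK Jfin) -(fineK Gfin) in I0 JI J0 G0 Gn *.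
move: I0 JI J0 G0 Gn.
set i := fine I; set j := fine J; set g := fine G.
rewrite -EFinM !lee_fin => i0 ji j0 g0 gn.
suff H : (1 + ((1 - e) * j + e * g) <= (1 + e * (n + 1)) * (1 + i))%R.
  by move: H; rewrite -lee_fin !EFinD !EFinM.
have h1 : (1 - e) * j <= (1 - e) * ((1 + e * n) * i).
  by apply: ler_wpM2l => //; rewrite subr_ge0.
have h2 : e * g <= e * n by apply: ler_wpM2l.
have h3 : (1 - e) * ((1 + e * n) * i) <= (1 + e * (n + 1)) * i.
  rewrite mulrA; apply: ler_wpM2r => //.
  have : 0 <= e * n by apply: mulr_ge0.
  nra.
nra.
Qed.

Lemma F_upper (nu : 'I_K -> dist R) (a : 'I_K) (x e : R) (e0 : 0 <= e) (e1 : e <= 1) n t h :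
  (exp_pulls_from (nup nu a x e e0 e1) A a n t h <=
    (1 + e * n%:R)%:E * exp_pulls_from nu A a n t h)%E.
Proof.
set nu' := nup nu a x e e0 e1.
elim: n t h => [|n IH] t h /=; first by rewrite mule0.
have hG z : (Gfun R K A nu' a n t (h, z) <= (1 + e * n%:R)%:E * Gfun R K A nu a n t (h, z))%E.
  rewrite /Gfun -ge0_integralZl.
  - apply: ge0_le_integral.
    + exact: measurable_itv.
    + by move=> u _; exact: (@F_ge0 R K A).
    + exact: measurable_funTS (@m_u R K A hA nu' a n t h z).
    + apply: measurable_funTS; apply: measurable_funeM.
      exact: (@m_u R K A hA nu a n t h z).
    + by move=> u _; exact: IH.
  - exact: measurable_itv.
  - exact: measurable_funTS (@m_u R K A hA nu a n t h z).
  - by move=> u _; exact: (@F_ge0 R K A).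
  - rewrite lee_fin; apply: addr_ge0 => //; exact: mulr_ge0.
set I := (\int[nu (A t h)]_z Gfun R K A nu a n t (h, z))%E.
have I0 : (0 <= I)%E by apply: integral_ge0 => z _; exact: (@Gfun_ge0 R K A).
have Ifin : I \is a fin_num.
  rewrite ge0_fin_numE //; apply: (@le_lt_trans _ _ n%:R%:E); last by rewrite ltry.
  apply: (@le_trans _ _ (\int[nu (A t h)]_z (cst n%:R%:E) z)%E); last by rewrite intP_cst.
  apply: ge0_le_integral.
  - exact: measurableT.
  - by move=> z _; exact: (@Gfun_ge0 R K A).
  - exact: (@m_z R K A hA nu a n t h).
  - exact: measurable_cst.
  - by move=> z _; exact: Gfun_le.
have hJ (P : dist R) : (\int[P]_z Gfun R K A nu' a n t (h, z) <=
     (1 + e * n%:R)%:E * \int[P]_z Gfun R K A nu a n t (h, z))%E.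
  rewrite -ge0_integralZl.
  - apply: ge0_le_integral.
    + exact: measurableT.
    + by move=> z _; exact: (@Gfun_ge0 R K A).
    + exact: (@m_z R K A hA nu' a n t h).
    + apply: measurable_funeM; exact: (@m_z R K A hA nu a n t h).
    + by move=> z _; exact: hG.
  - exact: measurableT.
  - exact: (@m_z R K A hA nu a n t h).
  - by move=> z _; exact: (@Gfun_ge0 R K A).
  - rewrite lee_fin; apply: addr_ge0 => //; exact: mulr_ge0.
have hen : (1 + e * n%:R <= 1 + e * n.+1%:R).
  by rewrite lerD2l; apply: ler_wpM2l => //; rewrite ler_nat.
case: (eqVneq (A t h) a) => hb.
- have hnu : nu' (A t h) = @mixd R (nu a) x e e0 e1 by rewrite /nu' /nup hb eqxx.
  rewrite hnu int_mix.
  + rewrite -[n.+1]addn1 natrD.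
    apply: ebound => //.
    * by apply: integral_ge0 => z _; apply: integral_ge0 => u _; exact: (@F_ge0 R K A).
    * by rewrite /I hb; exact: hJ.
    * by apply: integral_ge0 => u _; exact: (@F_ge0 R K A).
    * exact: (Gfun_le nu' a n t (h, x)).
  + exact: (@m_z R K A hA nu' a n t h).
  + by move=> z; apply: integral_ge0 => u _; exact: (@F_ge0 R K A).
- have -> : nu' (A t h) = nu (A t h) by rewrite /nu' /nup (negPf hb).
  have F0 : ((false%:R : R)%:E = 0)%E by [].
  rewrite F0 !add0e.
  by apply: (le_trans (hJ _)); apply: lee_wpmul2r => //; rewrite lee_fin.
Qed.
End Upper.
Section Top.
Variable R : realType.
Variable K : nat.
Variable A : strategy R K.
Hypothesis hA : measurable_strategy A.
Local Notation LR := (measurableTypeR R).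
Local Notation leb := (@lebesgue_measure R).

Lemma m_top (nu : 'I_K -> dist R) b T :
  measurable_fun setT (fun u : LR => exp_pulls_from nu A b T 1 (ext (fun _ => 0) 0 u)).
Proof. exact: (measurableT_comp (@mF R K A hA nu b T 1 isT) (@m_ext0 R)). Qed.

Lemma EP_ge0 (nu : 'I_K -> dist R) b T : (0 <= exp_pulls nu A b T)%E.
Proof. by apply: integral_ge0 => u _; exact: (@F_ge0 R K A). Qed.

Lemma EP_le (nu : 'I_K -> dist R) b T : (exp_pulls nu A b T <= T%:R%:E)%E.
Proof.
rewrite /exp_pulls; apply: (@le_trans _ _ (\int[leb]_(u in `[0%R, 1%R]%classic) (cst T%:R%:E) u)%E).
  apply: ge0_le_integral.
  - exact: measurable_itv.
  - by move=> u _; exact: (@F_ge0 R K A).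
  - exact: measurable_funTS (m_top nu b T).
  - exact: measurable_cst.
  - by move=> u _; exact: (@F_le R K A hA).
by rewrite int01_cst.
Qed.

Lemma EP_fin (nu : 'I_K -> dist R) b T : exp_pulls nu A b T \is a fin_num.
Proof.
rewrite ge0_fin_numE ?EP_ge0 //; apply: (le_lt_trans (EP_le nu b T)); exact: ltry.
Qed.

Lemma EP_sum (nu : 'I_K -> dist R) T : (\sum_(b < K) exp_pulls nu A b T = T%:R%:E)%E.
Proof.
rewrite /exp_pulls -ge0_integral_sum.
- under eq_integral => u _ do rewrite (@F_sum R K A hA).
  exact: int01_cst.
- exact: measurable_itv.
- move=> b; exact: measurable_funTS (m_top nu b T).
- by move=> b u _; exact: (@F_ge0 R K A).
Qed.

Lemma EP_upper (nu : 'I_K -> dist R) (a : 'I_K) (x e : R) (e0 : 0 <= e) (e1 : e <= 1) T :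
  (exp_pulls (@nup R K nu a x e e0 e1) A a T <= (1 + e * T%:R)%:E * exp_pulls nu A a T)%E.
Proof.
rewrite /exp_pulls -ge0_integralZl.
- apply: ge0_le_integral.
  + exact: measurable_itv.
  + by move=> u _; exact: (@F_ge0 R K A).
  + exact: measurable_funTS (m_top _ a T).
  + apply: measurable_funTS; apply: measurable_funeM; exact: (m_top nu a T).
  + by move=> u _; exact: (@F_upper R K A hA).
- exact: measurable_itv.
- exact: measurable_funTS (m_top nu a T).
- by move=> u _; exact: (@F_ge0 R K A).
- rewrite lee_fin; apply: addr_ge0 => //; exact: mulr_ge0.
Qed.
End Top.
Section Means.
Variable R : realType.

Lemma norm_bound (m M z : R) : m <= z -> z <= M -> `|z| <= `|m| + `|M|.
Proof.
move=> h1 h2; rewrite ler_norml; apply/andP; split.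
- have := ler_norm (- m); rewrite normrN => h3.
  have := normr_ge0 M. lra.
- have := ler_norm M => h3. have := normr_ge0 m. lra.
Qed.

Lemma supp_int (nu0 : dist R) (m M : R) : supported_in m M nu0 ->
  nu0.-integrable setT (fun z => z%:E)%E.
Proof.
move=> hs; apply/integrableP; split.
  exact/measurable_EFinP/measurable_id.
have mI : measurable (`[m, M]%classic : set R) by exact: measurable_itv.
have hN : nu0 (~` `[m, M]%classic) = 0%E.
  rewrite probability_setC //.
  have -> : nu0 `[m, M]%classic = 1%E by exact: hs.
  by rewrite subee.
have mabs : measurable_fun setT (fun z : R => `|z%:E|%E).
  by apply: measurableT_comp => //; exact/measurable_EFinP/measurable_id.
rewrite (@ge0_negligible_integral _ _ _ nu0 setT (~` `[m, M]%classic) (fun z : R => `|z%:E|%E)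
  (measurableC mI) measurableT mabs (fun _ _ => abse_ge0 _) hN).
rewrite setDE setCK setTI.
apply: (@le_lt_trans _ _ (\int[nu0]_(z in `[m, M]%classic) (cst (`|m| + `|M|)%:E) z)%E).
  apply: ge0_le_integral.
  - exact: mI.
  - by move=> z _; exact: abse_ge0.
  - exact: measurable_funTS mabs.
  - exact: measurable_cst.
  - move=> z; rewrite /= in_itv /= => /andP[h1 h2].
    by rewrite lee_fin; exact: norm_bound.
rewrite (@integral_cst _ _ _ nu0 _ mI).
set L := (X in (_ * X < _)%E); have -> : L = 1%E by exact: hs.
by rewrite mule1 ltry.
Qed.

Lemma mean_mix (nu0 : dist R) (m M x e : R) (e0 : 0 <= e) (e1 : e <= 1) :
  supported_in m M nu0 -> mean (@mixd R nu0 x e e0 e1) = (1 - e) * mean nu0 + e * x.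
Proof.
move=> hs.
have hi := @supp_int nu0 m M hs.
have mf : measurable_fun setT (fun z : R => z%:E) by exact/measurable_EFinP/measurable_id.
rewrite /mean integralE [in RHS]integralE.
rewrite !int_mix //.
have Pfin := integrable_pos_fin_num measurableT hi.
have Nfin := integrable_neg_fin_num measurableT hi.
set P := (\int[nu0]_z (EFin^\+%E z))%E in Pfin *.
set N := (\int[nu0]_z (EFin^\-%E z))%E in Nfin *.
have hab : ((EFin^\+ x)%E - (EFin^\- x)%E = x%:E)%E.
  by rewrite [in RHS](funeposneg (@EFin R)).
have afin : (EFin^\+ x)%E \is a fin_num.
  by rewrite funeposE; case: (lerP 0 x) => _; rewrite -EFin_max.
have bfin : (EFin^\- x)%E \is a fin_num.
  by rewrite funenegE; case: (lerP 0 x) => _; rewrite -EFin_max.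
have hab' : fine (EFin^\+ x)%E - fine (EFin^\- x)%E = x.
  by rewrite -fineB // hab.
rewrite -(fineK Pfin) -(fineK Nfin) -(fineK afin) -(fineK bfin).
rewrite -!EFinM -!EFinD /=.
rewrite -[X in _ = _ + e * X]hab'; ring.
- exact: measurable_funeneg.
- exact: measurable_funepos.
Qed.
End Means.
Section Core.
Variable R : realType.
Variable K : nat.
Variable A : strategy R K.
Hypothesis hA : measurable_strategy A.

Definition Nf (nu : 'I_K -> dist R) b T : R := fine (exp_pulls nu A b T).

Lemma EP_E (nu : 'I_K -> dist R) b T : exp_pulls nu A b T = (Nf nu b T)%:E.
Proof. by rewrite /Nf fineK // (@EP_fin R K A hA). Qed.

Lemma Nf_ge0 (nu : 'I_K -> dist R) b T : 0 <= Nf nu b T.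
Proof. by rewrite -lee_fin -EP_E (@EP_ge0 R K A). Qed.

Lemma regretE (nu : 'I_K -> dist R) T :
  regret nu A T = (\sum_(b < K) gap nu b * Nf nu b T)%:E.
Proof.
rewrite /regret -sumEFin; apply: eq_bigr => b _.
by rewrite EP_E -EFinM.
Qed.

Lemma Nsum (nu : 'I_K -> dist R) T : \sum_(b < K) Nf nu b T = T%:R.
Proof.
apply: EFin_inj; rewrite -sumEFin -(@EP_sum R K A hA nu T).
by apply: eq_bigr => b _; rewrite EP_E.
Qed.

Lemma mustar_ge (nu : 'I_K -> dist R) b : mean (nu b) <= mustar nu.
Proof.
have hb : ((mean (nu b))%:E <= \big[Order.max/-oo%E]_(a < K) (mean (nu a))%:E)%E.
  exact: le_bigmax.
have [i0 _ hi] := @eq_bigmax _ _ _ (-oo)%E b xpredT (fun a => (mean (nu a))%:E) isT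
  (fun _ _ => leNye _).
by rewrite /mustar hi /=; rewrite hi lee_fin in hb.
Qed.

Lemma gap_ge0 (nu : 'I_K -> dist R) b : 0 <= gap nu b.
Proof. by rewrite /gap subr_ge0 mustar_ge. Qed.

Lemma mustar_eq (nu : 'I_K -> dist R) a :
  (forall b, mean (nu b) <= mean (nu a)) -> mustar nu = mean (nu a).
Proof.
move=> ha; rewrite /mustar.
have -> : (\big[Order.max/-oo%E]_(b < K) (mean (nu b))%:E = (mean (nu a))%:E)%E.
  apply/eqP; rewrite eq_le; apply/andP; split; last exact: le_bigmax.
  apply/bigmax_leP; split; first exact: leNye.
  by move=> b _; rewrite lee_fin.
by [].
Qed.

Lemma supp_mono (P : dist R) (m M x : R) : M <= x -> supported_in m M P -> supported_in m x P.
Proof.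
move=> Mx hs; rewrite /supported_in; apply/eqP; rewrite eq_le; apply/andP; split.
  exact: probability_le1 (measurable_itv _).
have <- : P `[m, M]%classic = 1%E by exact: hs.
apply: le_measure; rewrite ?inE; try exact: measurable_itv.
move=> z; rewrite /= !in_itv /= => /andP[-> zM] /=.
exact: le_trans zM Mx.
Qed.

Lemma nup_supp (nu : 'I_K -> dist R) (a : 'I_K) (m M x e : R) (e0 : 0 <= e) (e1 : e <= 1) :
  m < M -> M <= x -> in_Dmm m M nu -> in_Dmm m x (@nup R K nu a x e e0 e1).
Proof.
move=> mM Mx hD b; rewrite /nup; case: eqP => _; last exact: supp_mono (hD b).
rewrite /supported_in /mixd /= mixmE.
have -> : (nu a) `[m, x]%classic = 1%E by exact: supp_mono (hD a).
rewrite diracE mem_set ?mule1 -?EFinD ?subrK //.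
by rewrite /= in_itv /= lexx andbT; exact: le_trans (ltW mM) Mx.
Qed.

Lemma core (nu : 'I_K -> dist R) (m M : R) (Phi : nat -> R) :
  m < M -> in_Dmm m M nu ->
  (forall (m M : R) (nu : 'I_K -> dist R), m < M -> in_Dmm m M nu ->
     forall T : nat, (1 <= T)%N ->
       (regret nu A T <= ((M - m) * Phi T)%:E)%E) ->
  forall T, (1 <= T)%N -> forall (a : 'I_K) (e x : R), 0 <= e -> e <= 1 -> M <= x ->
  0 <= e * (x - mean (nu a)) - gap nu a ->
  (e * (x - mean (nu a)) - gap nu a) * (T%:R - (1 + e * T%:R) * Nf nu a T)
     <= (x - m) * Phi T.
Proof.
move=> mM hD hreg T T1 a e x e0 e1 Mx g0.
set g := e * (x - mean (nu a)) - gap nu a.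
set nu' := @nup R K nu a x e e0 e1.
have hD' : in_Dmm m x nu' := @nup_supp nu a m M x e e0 e1 mM Mx hD.
have hr := hreg m x nu' (lt_le_trans mM Mx) hD' T T1.
rewrite regretE lee_fin in hr.
have meana : mean (nu' a) = (1 - e) * mean (nu a) + e * x.
  by rewrite /nu' /nup eqxx; exact: mean_mix (hD a).
have meanb b : b != a -> mean (nu' b) = mean (nu b).
  by move=> hb; rewrite /nu' /nup (negPf hb).
have hg : mean (nu' a) - mustar nu = g.
  by rewrite meana /g /gap; ring.
have hmax : forall b, mean (nu' b) <= mean (nu' a).
  move=> b; case: (eqVneq b a) => [-> //|hb].
  rewrite (meanb b hb); have := mustar_ge nu b; have : 0 <= g by [].
  have := hg; lra.
have hms := @mustar_eq nu' a hmax.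
have gapa : gap nu' a = 0 by rewrite /gap hms subrr.
have gapb b : b != a -> g <= gap nu' b.
  move=> hb; rewrite /gap hms (meanb b hb); have := hg; have := mustar_ge nu b; lra.
have hsum : g * (T%:R - Nf nu' a T) <= \sum_(b < K) gap nu' b * Nf nu' b T.
  rewrite [X in _ <= X](bigD1 a) //= gapa mul0r add0r.
  rewrite -(Nsum nu' T) [X in _ * (X - _)](bigD1 a) //= [Nf nu' a T + _]addrC addrK mulr_sumr.
  apply: ler_sum => b hb; apply: ler_wpM2r; first exact: Nf_ge0.
  exact: gapb.
have hup : Nf nu' a T <= (1 + e * T%:R) * Nf nu a T.
  by rewrite -lee_fin EFinM -!EP_E; exact: (@EP_upper R K A hA).
apply: le_trans hr; apply: le_trans hsum.
apply: ler_wpM2l => //; lra.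
Qed.
End Core.
Section Final.
Variable R : realType.
Variable K : nat.
Variable A : strategy R K.
Hypothesis hA : measurable_strategy A.

Lemma liminf_ge (u : nat -> \bar R) (c : \bar R) :
  (\forall n \near \oo, (c <= u n)%E) -> (c <= limn_einf u)%E.
Proof.
move=> [N _ HN]; rewrite limn_einf_lim; apply: lime_ge; first exact: is_cvg_einfs.
exists N => // n /= Nn; apply: le_ereal_inf_tmp => _ [k /= nk <-].
by apply: HN => /=; exact: leq_trans Nn nk.
Qed.

Lemma lowerN (nu : 'I_K -> dist R) (m M : R) (Phi : nat -> R) :
  m < M -> in_Dmm m M nu -> (forall T, 0 <= Phi T) ->
  (forall (m M : R) (nu : 'I_K -> dist R), m < M -> in_Dmm m M nu ->
     forall T : nat, (1 <= T)%N ->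
       (regret nu A T <= ((M - m) * Phi T)%:E)%E) ->
  forall T, (1 <= T)%N -> forall (a : 'I_K) (psi : R),
  Phi T <= psi -> 1 <= psi -> psi <= T%:R / 2 ->
  T%:R <= 4 * (1 + 2 * psi) * Nf R K A nu a T.
Proof.
move=> mM hD Phi0 hreg T T1 a psi Ppsi psi1 psiT.
have Tpos : 0 < T%:R :> R by rewrite ltr0n.
set Tr := T%:R : R.
set e := 2 * psi / Tr.
have epos : 0 < e by rewrite /e divr_gt0 // mulr_gt0 //; lra.
have eT : e * Tr = 2 * psi by rewrite /e divfK // gt_eqF.
have e1 : e <= 1.
  by rewrite /e ler_pdivrMr // mul1r; lra.
set mu := mean (nu a).
set Dl := gap nu a / e.
have eD : e * Dl = gap nu a by rewrite /Dl mulrC divfK // gt_eqF.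
have D0 : 0 <= Dl by rewrite /Dl divr_ge0 ?(@gap_ge0 R K) // ltW.
set x := M + 1 + `|M| + 3 * Dl + 3 * `|mu| + 2 * `|m|.
have hM := ler_norm (- M); rewrite normrN in hM.
have hmu := ler_norm mu.
have hm := ler_norm (- m); rewrite normrN in hm.
have n0 := normr_ge0 m; have n1 := normr_ge0 mu; have n2 := normr_ge0 M.
have Mx : M <= x by rewrite /x; lra.
have gE : e * (x - mu) - gap nu a = e * (x - mu - Dl) by rewrite -eD; ring.
have xpos : 0 < x - mu - Dl by rewrite /x; lra.
have g0 : 0 < e * (x - mu) - gap nu a by rewrite gE mulr_gt0.
have hc : 2 * e * (x - m) <= 3 * (e * (x - mu) - gap nu a).
  rewrite gE; have : 2 * (x - m) <= 3 * (x - mu - Dl) by rewrite /x; lra.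
  move=> h; have := ler_wpM2l (ltW epos) h; lra.
have hcore := @core R K A hA nu m M Phi mM hD hreg T T1 a e x (ltW epos) e1 Mx (ltW g0).
set g := e * (x - mean (nu a)) - gap nu a in hcore g0 hc.
set N := Nf R K A nu a T in hcore *.
have N0 : 0 <= N by exact: (@Nf_ge0 R K A hA).
have P0 := Phi0 T.
have h1 : 2 * e * (g * (Tr - (1 + e * Tr) * N)) <= 3 * g * Phi T.
  have h2 := ler_wpM2l (ltW (mulr_gt0 (ltr0Sn R 1) epos)) hcore.
  apply: (le_trans h2).
  have : (2 * e) * (x - m) * Phi T <= 3 * g * Phi T by apply: ler_wpM2r.
  lra.
have h3 : 2 * e * (Tr - (1 + e * Tr) * N) <= 3 * psi.
  have h4 : g * (2 * e * (Tr - (1 + e * Tr) * N)) <= g * (3 * psi).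
    have : 3 * g * Phi T <= 3 * g * psi by apply: ler_wpM2l => //; lra.
    move=> h5; have := le_trans h1 h5; lra.
  by rewrite ler_pM2l in h4.
have h6 : psi <= 2 * e * (1 + 2 * psi) * N.
  move: h3; rewrite -/Tr.
  have : 2 * e * Tr = 4 * psi by rewrite -mulrA eT; ring.
  rewrite eT; nra.
have h7 : psi * Tr <= 4 * psi * (1 + 2 * psi) * N.
  have := ler_wpM2r (ltW Tpos) h6.
  have -> : 2 * e * (1 + 2 * psi) * N * Tr = 2 * (e * Tr) * (1 + 2 * psi) * N by ring.
  rewrite eT; lra.
have hpsi : 0 < psi by lra.
have : psi * Tr <= psi * (4 * (1 + 2 * psi) * N) by lra.
by rewrite ler_pM2l.
Qed.
End Final.
Theorem theorem1 (R : realType) (K : nat) (A : strategy R K) (Phi : nat -> R) :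
  (2 <= K)%N ->
  measurable_strategy A ->
  (forall T, 0 <= Phi T) ->
  (forall (m M : R) (nu : 'I_K -> dist R), m < M -> in_Dmm m M nu ->
     forall T : nat, (1 <= T)%N ->
       (regret nu A T <= ((M - m) * Phi T)%:E)%E) ->
  (fun T : nat => Phi T / T%:R) @ \oo --> 0 ->
  forall nu : 'I_K -> dist R, in_Dbounded nu ->
    ((1 / 16 * \sum_(a < K) gap nu a)%:E <=
       limn_einf (fun T : nat => regret nu A T * (Phi T / T%:R)%:E))%E.
Proof.
move=> K2 hA Phi0 hreg hcvg nu [m [M [mM hD]]].
apply: liminf_ge.
set S := \sum_(a < K) gap nu a.
have S0 : 0 <= S by apply: sumr_ge0 => a _; exact: gap_ge0.
have R0 T : 0 <= \sum_(b < K) gap nu b * Nf R K A nu b T.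
  apply: sumr_ge0 => b _; apply: mulr_ge0; first exact: gap_ge0.
  exact: (@Nf_ge0 R K A hA).
case: (eqVneq S 0) => hS.
  apply: nearW => T; rewrite hS mulr0 regretE // -EFinM lee_fin.
  by apply: mulr_ge0 => //; apply: divr_ge0.
have Spos : 0 < S by rewrite lt_neqAle eq_sym hS S0.
near=> T.
have T2 : (2 <= T)%N by near: T; exact: nbhs_infty_ge.
have hP : Phi T / T%:R < 1 / 2.
  by near: T; apply: (cvgr_lt _ hcvg); rewrite divr_gt0.
have hT : 12 * (M - m) / S + 1 <= T%:R by near: T; exact: nbhs_infty_ger.
rewrite regretE // -EFinM lee_fin.
set Rr := \sum_(b < K) gap nu b * Nf R K A nu b T.
have Rr0 : 0 <= Rr by exact: R0.
have Tpos : 0 < T%:R :> R by rewrite ltr0n; exact: leq_trans T2.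
have T2r : 2 <= T%:R :> R by rewrite (ler_nat R 2 T).
have PhiT : Phi T <= T%:R / 2.
  rewrite ltr_pdivrMr // in hP; rewrite ler_pdivlMr //; lra.
set psi := Num.max (Phi T) 1.
have psi1 : Phi T <= psi by rewrite /psi le_max lexx.
have psi2 : 1 <= psi by rewrite /psi le_max lexx orbT.
have psi3 : psi <= T%:R / 2.
  rewrite /psi ge_max PhiT /= ler_pdivlMr //; lra.
have T1 : (1 <= T)%N by exact: leq_trans T2.
have hN a : T%:R <= 4 * (1 + 2 * psi) * Nf R K A nu a T.
  exact: (@lowerN R K A hA nu m M Phi mM hD Phi0 hreg T T1 a psi psi1 psi2 psi3).
have hRS : T%:R * S <= 4 * (1 + 2 * psi) * Rr.
  rewrite /S /Rr !mulr_sumr; apply: ler_sum => a _.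
  have := ler_wpM2l (@gap_ge0 R K nu a) (hN a).
  have -> : gap nu a * (4 * (1 + 2 * psi) * Nf R K A nu a T) =
            4 * (1 + 2 * psi) * (gap nu a * Nf R K A nu a T) by ring.
  by rewrite mulrC.
have hRr : Rr <= (M - m) * Phi T.
  by have := hreg m M nu mM hD T T1; rewrite regretE // lee_fin.
case: (lerP 1 (Phi T)) => hP1.
  have hpsi : psi = Phi T by rewrite /psi; apply/max_idPl.
  rewrite hpsi in hRS.
  have key : T%:R * S <= 16 * (Rr * Phi T).
    have : Rr <= Rr * Phi T by rewrite -[X in X <= _]mulr1; apply: ler_wpM2l.
    lra.
  rewrite mulrA ler_pdivlMr //; lra.
have hpsi : psi = 1 by rewrite /psi; apply/max_idPr; exact: ltW.
rewrite hpsi in hRS.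
exfalso.
have hS2 := ler_wpM2r (ltW Spos) hT.
rewrite mulrDl mul1r divfK ?gt_eqF // in hS2.
have : (M - m) * Phi T <= (M - m) * 1.
  by apply: ler_wpM2l; [rewrite subr_ge0 ltW | exact: ltW].
lra.
Unshelve. all: by end_near.
Qed.
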